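(* Let $\mathbb{G}$ be a topological map embedded in a closed orientable surface of genus $g\ge0$ and let $\ell$ be a tame loop of $\mathbb{G}$. Let $\mathfrak{m}_\ell$ be the real vector space spanned by the Makeenko--Migdal vectors $\mu_v$, $v\in V_\ell$, and the 2-forms $d\omega_e$, $e\notin E_\ell$. Then $$\mathfrak{m}_\ell=\begin{cases}\{\alpha\in\Omega^2(\mathbb{G},\mathbb{R}):\langle\alpha,\mu_*\rangle=0\} & \text{if }[\ell]_\mathbb{R}\neq0,\\ \{\alpha\in\Omega^2(\mathbb{G},\mathbb{R}):\langle\alpha,\mu_*\rangle=\langle\alpha,n_\ell\rangle=0\} & \text{if }[\ell]_\mathbb{R}=0.\end{cases}$$
   Context: A map $\mathbb{G}=(V,E,F)$ is a graph embedded in the surface with all faces homeomorphic to discs; every edge $e$ comes with its reverse $e^{-1}$, and $E_+$ (resp. $F_+$) is a choice of one orientation per edge (resp. the positively oriented faces). $\Omega^0,\Omega^1,\Omega^2$ are the real-valued functions on $V$, on $E$ with $\omega(e^{-1})=-\omega(e)$, and on $F$ with $\mu(f^{-1})=-\mu(f)$; they carry the inner products making $(f_v)_{v\in V}$, $(\omega_e)_{e\in E_+}$, $(\mu_f)_{f\in F_+}$ orthonormal, where $f_v,\omega_e,\mu_f$ are the indicator forms ($\omega_{e^{-1}}=-\omega_e$). $d\omega(f)=\sum_{e\in\partial f}\omega(e)$ (sum over the edges of the boundary loop of $f$), $df(e)=f(\overline e)-f(\underline e)$, and $d^*$ is the adjoint of $d$. $\mu_*$ is the 2-form equal to $1$ on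 every $f\in F_+$. For a path $\ell=e_1\cdots e_n$, $\omega_\ell=\sum_i\omega_{e_i}$. The homology class $[\ell]_\mathbb{R}$ is the class of $\omega_\ell$ in $\ker(d^*:\Omega^1\to\Omega^0)/d^*(\Omega^2)$. If $[\ell]_\mathbb{R}=0$, the winding function $n_\ell\in\Omega^2$ is the unique 2-form with $d^*n_\ell=\omega_\ell$ and $\langle n_\ell,\mu_*\rangle=0$. A tame loop uses each unoriented edge at most once and each vertex at most twice, and at each vertex $v$ visited twice, labelling the four outgoing edges at $v$ used by $\ell$ (up to orientation) as $e_1,e_2,e_3,e_4$ in counterclockwise cyclic order, $\ell$ is cyclically equivalent to a loop of the form $\alpha e_1^{-1}e_3\beta e_2^{-1}e_4\gamma$; $V_\ell$ is the set of such vertices, and the Makeenko--Migdal vector at $v$ is $\mu_v=d\omega_{e_1}+d\omega_{e_3}=-d\omega_{e_2}-d\omega_{e_4}$. $E_\ell$ is the set of edges $e$ such that $\ell$ runs through $e$ or $e^{-1}$. *)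

(* Defs.v *)
From HB Require Import structures.
From mathcomp Require Import all_boot all_order all_algebra fingroup perm.
From mathcomp Require Import reals.
Set Implicit Arguments. Unset Strict Implicit. Unset Printing Implicit Defensive.
Import Order.TTheory GRing.Theory Num.Theory.
Local Open Scope ring_scope.

(* A map G = (V,E,F) embedded in a closed orientable surface is encoded as a
   combinatorial map (rotation system):
   - D           : the set E of oriented edges (darts);
   - rev e       : the reverse e^{-1} of e (a fixed-point-free involution);
   - sigma e     : the next outgoing edge after e, counterclockwise, around
                   the source vertex of e.
   Vertices are the sigma-orbits (the vertex of e is its source \underline e,
   the target \overline e is the vertex of rev e).  The positively oriented
   faces are the orbits of  phi := sigma^{-1} \o rev  (the face lying to the
   left of e; its boundary loop is the phi-orbit of e, run counterclockwise).
   Every connected combinatorial map is a map on a closed orientable surface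
   (of genus given by Euler's formula) with disc faces, and conversely. *)

Section Maps.
Variables (D : finType) (rev : D -> D) (sigma : {perm D}).

Definition is_map : Prop :=
  [/\ involutive rev, (forall x, rev x != x) &
      (forall x y, connect [rel a b | (b == sigma a) || (b == rev a)] x y)].

Definition same_vertex (x y : D) : bool := fconnect sigma x y.

Definition phi (x : D) : D := (sigma^-1)%g (rev x).

(* positively oriented faces F_+, represented by the roots of the phi-orbits *)
Definition face := {x : D | froots phi x}.

Variable R : realType.

Definition one_form (w : D -> R) : Prop := forall x, w (rev x) = - w x.

(* inner product on Omega^1: (omega_e)_{e in E_+} orthonormal, i.e.
   <w,w'> = sum_{e in E_+} w e * w' e = 1/2 sum_{e in E} w e * w' e *)
Definition ip1 (w w' : D -> R) : R := 2^-1 * \sum_(x : D) w x * w' x.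

(* Omega^2 : functions on F_+ (extended by mu(f^{-1}) = - mu(f));
   inner product making (mu_f)_{f in F_+} orthonormal *)
Definition ip2 (a b : face -> R) : R := \sum_(f : face) a f * b f.

Definition d1 (w : D -> R) : face -> R :=
  fun f => \sum_(x : D | froot phi x == val f) w x.

Definition mustar : face -> R := fun _ => 1.

Definition omega_e (e : D) : D -> R :=
  fun x => (x == e)%:R - (x == rev e)%:R.

Definition omega_loop (l : seq D) : D -> R :=
  fun x => \sum_(e <- l) omega_e e x.

(* d^* mu = w  (d^* the adjoint of d : Omega^1 -> Omega^2), expressed by
   adjointness: <mu, d b> = <w, b> for every b in Omega^1 *)
Definition dstar2_eq (mu : face -> R) (w : D -> R) : Prop :=
  forall b, one_form b -> ip2 mu (d1 b) = ip1 w b.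

(* [l]_R = 0 : omega_l lies in d^*(Omega^2) *)
Definition homology_zero (l : seq D) : Prop :=
  exists mu : face -> R, dstar2_eq mu (omega_loop l).

End Maps.

Section Loops.
Variables (D : finType) (rev : D -> D) (sigma : {perm D}).

Definition is_loop (l : seq D) : bool :=
  path.cycle (fun x y => same_vertex sigma (rev x) y) l.

Definition visits (l : seq D) (v : D) : nat :=
  count (fun x => same_vertex sigma v x) l.

(* At vertex v: e1,e2,e3,e4 are outgoing edges at v in counterclockwise
   cyclic order, and l is cyclically equivalent to
   alpha e1^{-1} e3 beta e2^{-1} e4 gamma. *)
Definition crossing (l : seq D) (v e1 e2 e3 e4 : D) : Prop :=
  [/\ [&& same_vertex sigma v e1, same_vertex sigma v e2,
          same_vertex sigma v e3 & same_vertex sigma v e4],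
      (0 < findex sigma e1 e2 < findex sigma e1 e3)%N,
      (findex sigma e1 e3 < findex sigma e1 e4)%N &
      exists k (a b c : seq D),
        rot k l = a ++ [:: rev e1; e3] ++ b ++ [:: rev e2; e4] ++ c].

Definition tame (l : seq D) : Prop :=
  [/\ is_loop l,
      (forall x, count_mem x l + count_mem (rev x) l <= 1)%N,
      (forall v, visits l v <= 2)%N &
      (forall v, visits l v = 2%N ->
         exists e1 e2 e3 e4, crossing l v e1 e2 e3 e4)].

Variable R : realType.

Definition MMvec (l : seq D) (m : face rev sigma -> R) : Prop :=
  exists v e1 e2 e3 e4, visits l v = 2%N /\ crossing l v e1 e2 e3 e4 /\
    m =1 (fun f => d1 (omega_e rev R e1) f + d1 (omega_e rev R e3) f).

Definition mgen (l : seq D) (g : face rev sigma -> R) : Prop :=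
  MMvec l g \/
  exists e, [/\ e \notin l, rev e \notin l & g =1 d1 (omega_e rev R e)].

Definition in_m (l : seq D) (a : face rev sigma -> R) : Prop :=
  exists n (c : 'I_n -> R) (g : 'I_n -> face rev sigma -> R),
    (forall i, mgen l (g i)) /\ a =1 (fun f => \sum_(i < n) c i * g i f).

End Loops.

(* Main.v *)
Require Import Defs.
From HB Require Import structures.
From mathcomp Require Import all_boot all_order all_algebra fingroup perm.
From mathcomp Require Import reals.
From mathcomp Require Import ring lra zify.
From Stdlib Require Import ClassicalEpsilon.
Set Implicit Arguments. Unset Strict Implicit. Unset Printing Implicit Defensive.
Import Order.TTheory GRing.Theory Num.Theory.
Local Open Scope ring_scope.

Section Pf.
Variables (R : realType) (D : finType) (rev : D -> D) (sigma : {perm D}).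
Hypothesis revK : involutive rev.
Hypothesis rev_neq : forall x, rev x != x.
Hypothesis conn : forall x y,
  connect [rel a b | (b == sigma a) || (b == rev a)] x y.

Local Notation phi := (phi rev sigma).
Local Notation face := (face rev sigma).

Lemma rev_inj : injective rev. Proof. exact: inv_inj. Qed.

Lemma phi_inj : injective phi.
Proof. by move=> x y; rewrite /Defs.phi => /perm_inj /rev_inj. Qed.

Lemma fsym : connect_sym (frel phi).
Proof. exact: fconnect_sym phi_inj. Qed.

Definition fc (x : D) : face :=
  @exist D (fun x => froots phi x) (froot phi x) (roots_root fsym x).

Lemma fc_val (f : face) : fc (val f) = f.
Proof. by apply: val_inj => /=; apply/eqP; case: f. Qed.

Lemma fc_phi x : fc (phi x) = fc x.
Proof. apply: val_inj => /=; symmetry; apply/(fingraph.rootP fsym); exact: fconnect1. Qed.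

Lemma fc_rev x : fc (rev x) = fc ((sigma^-1)%g x).
Proof. by rewrite -fc_phi /Defs.phi revK. Qed.

Lemma ip2C (a b : face -> R) : ip2 a b = ip2 b a.
Proof. by apply: eq_bigr => f _; rewrite mulrC. Qed.

Lemma ip2_d1 (a : face -> R) b : ip2 a (d1 b) = \sum_x a (fc x) * b x.
Proof.
rewrite /ip2 /d1 (partition_big fc xpredT) //=.
apply: eq_bigr => f _; rewrite mulr_sumr; apply: eq_big => x.
  by rewrite -val_eqE.
by move=> /eqP e; congr (a _ * _); apply: val_inj.
Qed.

Definition beta (a : face -> R) x := a (fc x) - a (fc (rev x)).

Lemma beta_one a : one_form rev (beta a).
Proof. by move=> x; rewrite /beta revK opprB. Qed.

Lemma ip2_beta a b : one_form rev b -> ip2 a (d1 b) = ip1 (beta a) b.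
Proof.
move=> ob; rewrite ip2_d1 /ip1.
set S := \sum_x a (fc x) * b x.
have E : \sum_x a (fc (rev x)) * b x = - S.
  rewrite /S (reindex_inj rev_inj) /= -sumrN; apply: eq_bigr => x _.
  by rewrite revK ob mulrN.
have -> : \sum_x beta a x * b x = S + S.
  rewrite /beta; under eq_bigr do rewrite mulrBl.
  by rewrite sumrB E opprK.
lra.
Qed.

Lemma sum_eq1 (F : D -> R) e : \sum_x F x * (x == e)%:R = F e.
Proof.
rewrite (bigD1 e) //= eqxx mulr1 big1 ?addr0 // => x /negbTE ->.
by rewrite mulr0.
Qed.

Lemma omega_one e : one_form rev (omega_e rev R e).
Proof.
move=> x; rewrite /omega_e opprB; congr (_%:R - _%:R).
  by rewrite -{1}(revK e) (inj_eq rev_inj).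
by rewrite (inj_eq rev_inj).
Qed.

Lemma ip1_omega w e : one_form rev w -> ip1 w (omega_e rev R e) = w e.
Proof.
move=> ow; rewrite /ip1 /omega_e.
under eq_bigr do rewrite mulrBr.
rewrite sumrB !sum_eq1 ow; lra.
Qed.

Lemma ip2_d1omega a e : ip2 a (d1 (omega_e rev R e)) = beta a e.
Proof. rewrite ip2_beta; last exact: omega_one. by rewrite ip1_omega //; apply: beta_one. Qed.

Lemma omega_loopE l x :
  omega_loop rev R l x = (count_mem x l)%:R - (count_mem (rev x) l)%:R.
Proof.
rewrite /omega_loop; elim: l => [|e l IH]; first by rewrite big_nil subrr.
rewrite big_cons IH /= natrD natrD /omega_e.
have -> : (x == rev e) = (e == rev x).
  by rewrite -{1}(revK x) (inj_eq rev_inj) eq_sym.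
rewrite (eq_sym x e); lra.
Qed.

Lemma omega_loop_one l : one_form rev (omega_loop rev R l).
Proof. by move=> x; rewrite !omega_loopE revK opprB. Qed.

Lemma beta0_const (u : face -> R) : (forall x, beta u x = 0) ->
  forall f f', u f = u f'.
Proof.
move=> b0.
have H : forall x y, u (fc x) = u (fc y).
  move=> x y; have := conn x y.
  have cl : closed [rel a b | (b == sigma a) || (b == rev a)]
              [pred z | u (fc z) == u (fc x)].
    have br : forall z, u (fc (rev z)) = u (fc z).
      by move=> z; have := b0 z; rewrite /beta => /eqP; rewrite subr_eq0 => /eqP ->.
    move=> z w /= /orP[] /eqP ->; rewrite !inE.
      have -> : fc z = fc (rev (sigma z)).
        by rewrite -[RHS]fc_phi /Defs.phi revK permK.
      by rewrite br.
    by rewrite br.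
  move/(closed_connect cl); rewrite !inE eqxx => /esym/eqP ->; done.
by move=> f f'; rewrite -(fc_val f) -(fc_val f'); apply: H.
Qed.

Lemma sv_sym x y : same_vertex sigma x y = same_vertex sigma y x.
Proof. exact: (fconnect_sym (@perm_inj _ sigma)). Qed.

Lemma sv_trans x y z : same_vertex sigma x y -> same_vertex sigma y z ->
  same_vertex sigma x z.
Proof. exact: connect_trans. Qed.

Lemma next_mid (a c : seq D) u v : uniq (a ++ u :: v :: c) ->
  next (a ++ u :: v :: c) u = v.
Proof.
move=> U; rewrite next_nth mem_cat inE eqxx orbT.
case: a U => [|y a] /= U; first by rewrite eqxx.
move: U => /andP[yN U].
have yu : (y == u) = false.
  by apply/negbTE; apply: contraNneq yN => ->; rewrite mem_cat inE eqxx orbT.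
have uN : u \notin a by move: U; rewrite cat_uniq /= => /and3P[_ /norP[] ].
rewrite yu index_cat (negbTE uN) /= eqxx addn0 nth_cat ltnNge leqnSn /= subSnn.
done.
Qed.

Lemma size_count (P : pred D) (s zs : seq D) : uniq zs ->
  (forall z, z \in zs -> (z \in s) && P z) -> (size zs <= count P s)%N.
Proof.
move=> Uz H; rewrite -size_filter; apply: uniq_leq_size => // z /H /andP[zs0 Pz].
by rewrite mem_filter Pz zs0.
Qed.

Lemma sum_support (b : D -> R) (P : pred D) (S : seq D) : uniq S ->
  (forall z, z \in S -> P z) -> (forall z, P z -> z \notin S -> b z = 0) ->
  \sum_(z | P z) b z = \sum_(z <- S) b z.
Proof.
move=> US HP H0; rewrite big_uniq // (bigID (fun z => z \in S)) /=.
rewrite [X in _ + X]big1 ?addr0; last by move=> z /andP[]; exact: H0.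
apply: eq_bigl => z; case: (boolP (z \in S)) => zS; rewrite ?andbT ?andbF //.
exact: HP.
Qed.

Lemma div_beta (u : face -> R) w :
  \sum_(z | same_vertex sigma w z) beta u z = 0.
Proof.
rewrite /beta sumrB [X in _ - X](reindex_inj (@perm_inj _ sigma)) /=.
rewrite [X in _ - X](eq_big (fun z => same_vertex sigma w z) (fun z => u (fc z))).
- by rewrite subrr.
- by move=> z /=; rewrite /same_vertex -(same_fconnect1_r (@perm_inj _ sigma)).
- by move=> z _; rewrite fc_rev permK.
Qed.

Lemma ip2_ext (a a' b : face -> R) : a =1 a' -> ip2 a b = ip2 a' b.
Proof. by move=> e; apply: eq_bigr => f _; rewrite e. Qed.

Lemma const_orth (a v : face -> R) : (forall f f', v f = v f') ->
  ip2 a (@mustar D rev sigma R) = 0 -> ip2 a v = 0.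
Proof.
move=> cv ha; case: (pickP (@predT face)) => [f0 _|none].
  have -> : ip2 a v = ip2 a (@mustar D rev sigma R) * v f0.
    rewrite /ip2 mulr_suml; apply: eq_bigr => f _.
    by rewrite /mustar mulr1 (cv f f0).
  by rewrite ha mul0r.
by rewrite /ip2 big_pred0.
Qed.

Section Loop.
Variable l : seq D.
Hypothesis tl : tame rev sigma l.

Lemma loop_l : is_loop rev sigma l. Proof. by case: tl. Qed.

Lemma cnt_l x : (count_mem x l + count_mem (rev x) l <= 1)%N.
Proof. by case: tl => _ H _ _; apply: H. Qed.

Lemma uniq_l : uniq l.
Proof.
apply: count_mem_uniq => x; have := cnt_l x.
case: (boolP (x \in l)) => xl.
  have : (0 < count_mem x l)%N by rewrite lt0n; apply/eqP => /count_memPn; rewrite xl.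
  lia.
by move/count_memPn: xl ->.
Qed.

Lemma notboth x : x \in l -> rev x \notin l.
Proof.
move=> xl; have := cnt_l x; rewrite !count_uniq_mem ?uniq_l // xl.
by case: (rev x \in l).
Qed.

Lemma next_inj : injective (next l).
Proof. exact: can_inj (prev_next uniq_l). Qed.

Lemma next_sv x : x \in l -> same_vertex sigma (rev x) (next l x).
Proof. move=> xl; exact: (next_cycle loop_l xl). Qed.

Lemma cross_facts w e1 e2 e3 e4 : crossing rev sigma l w e1 e2 e3 e4 ->
  [/\ [/\ e3 \in l, e4 \in l, rev e1 \in l & rev e2 \in l],
      next l (rev e1) = e3, next l (rev e2) = e4 &
      uniq [:: e1; e2; e3; e4]].
Proof.
case=> _ h1 h2 [k [a [b [c E]]]].
have U : uniq (rot k l) by rewrite rot_uniq uniq_l.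
have M : forall z, z \in rot k l -> z \in l by move=> z; rewrite mem_rot.
split.
- split; apply: M; rewrite E !(mem_cat, inE) eqxx ?orbT //.
- rewrite -(next_rot k uniq_l) E /=; apply: next_mid; rewrite -E //.
- rewrite -(next_rot k uniq_l) E /=.
  have -> : a ++ [:: rev e1, e3 & b ++ [:: rev e2, e4 & c]] =
            (a ++ [:: rev e1, e3 & b]) ++ [:: rev e2, e4 & c].
    by rewrite -catA.
  by apply: next_mid; rewrite -catA /= -E.
- rewrite /= !inE !negb_or; apply/and4P; split.
  + apply/and3P; split; apply/eqP => E'; move: h1 h2; rewrite -?E' findex0; lia.
  + apply/andP; split; apply/eqP => E'; move: h1 h2; rewrite -?E'; lia.
  + apply/eqP => E'; move: h1 h2; rewrite -?E'; lia.
  + done.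
Qed.

Section Beta.
Variable bt : D -> R.
Hypothesis bt1 : one_form rev bt.
Hypothesis HK1 : forall e, e \notin l -> rev e \notin l -> bt e = 0.
Hypothesis HMM : forall w e1 e2 e3 e4, visits sigma l w = 2%N ->
  crossing rev sigma l w e1 e2 e3 e4 -> bt e1 + bt e3 = 0.
Hypothesis Hdiv : forall w, \sum_(z | same_vertex sigma w z) bt z = 0.

Lemma supp y z : same_vertex sigma y z -> bt z != 0 ->
  z \in l \/ (rev z \in l /\ same_vertex sigma y (next l (rev z))).
Proof.
move=> yz nz; case: (boolP (z \in l)) => zl; first by left.
case: (boolP (rev z \in l)) => rzl; last by move: nz; rewrite HK1 ?eqxx.
right; split => //; apply: sv_trans yz _.
by have := next_sv rzl; rewrite revK.
Qed.

Lemma beta_next x : x \in l -> bt (next l x) = bt x.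
Proof.
move=> xl; set y := next l x.
have yl : y \in l by rewrite mem_next.
have hxy := next_sv xl; rewrite -/y in hxy.
have Py : same_vertex sigma y y by exact: connect0.
have v1 : (1 <= visits sigma l y)%N.
  have := @size_count (same_vertex sigma y) l [:: y] is_true_true.
  by apply => z; rewrite inE => /eqP ->; rewrite yl Py.
have v2 : (visits sigma l y <= 2)%N by case: tl => _ _ H _; apply: H.
have [vy1|vy2] : visits sigma l y = 1%N \/ visits sigma l y = 2%N by lia.
- have only : forall z, z \in l -> same_vertex sigma y z -> z = y.
    move=> z zl Pz; case: (eqVneq z y) => // zy.
    have : (2 <= visits sigma l y)%N.
      change (size [:: z; y] <= count (same_vertex sigma y) l)%N.
      apply: size_count; first by rewrite /= inE zy.
      by move=> w; rewrite !inE => /orP[]/eqP->; rewrite ?zl ?Pz ?yl ?Py.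
    lia.
  have ny : y != rev x.
    by apply: contraNneq (notboth xl) => <-.
  have := Hdiv y.
  rewrite (@sum_support bt (same_vertex sigma y) [:: y; rev x]).
  - by rewrite !big_cons big_nil bt1 => h; lra.
  - by rewrite /= inE ny.
  - move=> z; rewrite !inE => /orP[]/eqP->; [exact: Py | by rewrite sv_sym].
  - move=> z Pz; rewrite !inE negb_or => /andP[zy zrx].
    case: (eqVneq (bt z) 0) => // nz; case: (supp Pz nz) => [zl|[rzl Pn]].
      by rewrite (only z zl Pz) eqxx in zy.
    have nl : next l (rev z) = next l x.
      apply: only => //; by rewrite mem_next.
    move/next_inj/(congr1 rev): nl; rewrite revK => ez.
    by rewrite ez eqxx in zrx.
- have [e1 [e2 [e3 [e4 cr]]]] : exists e1 e2 e3 e4,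
      crossing rev sigma l y e1 e2 e3 e4 by case: tl => _ _ _ H; apply: H.
  have [[e3l e4l r1l r2l] n1 n2 U4] := cross_facts cr.
  have [sv _ _ _] := cr; move/and4P: sv => [P1 P2 P3 P4].
  move: (U4); rewrite /= !inE !negb_or => /and4P[/and3P[n12 n13 n14] /andP[n23 n24] n34 _].
  have two : forall z, z \in l -> same_vertex sigma y z -> z = e3 \/ z = e4.
    move=> z zl Pz; case: (eqVneq z e3) => [->|z3]; first by left.
    case: (eqVneq z e4) => [->|z4]; first by right.
    have : (3 <= visits sigma l y)%N.
      change (size [:: z; e3; e4] <= count (same_vertex sigma y) l)%N.
      apply: size_count; first by rewrite /= !inE negb_or z3 z4 n34.
      move=> w; rewrite !inE => /or3P[]/eqP->; apply/andP; split; assumption.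
    by rewrite vy2.
  have hm := HMM vy2 cr.
  case: (two y yl Py) => ey.
  + have : next l x = next l (rev e1) by rewrite n1 -ey.
    move/next_inj => xe; rewrite ey xe bt1; lra.
  + have : next l x = next l (rev e2) by rewrite n2 -ey.
    move/next_inj => xe.
    have := Hdiv y; rewrite (@sum_support bt _ [:: e1; e2; e3; e4]) //.
    * rewrite !big_cons big_nil => h; rewrite ey xe bt1; lra.
    * move=> z; rewrite !inE => /or4P[]/eqP-> //.
    * move=> z Pz; rewrite !inE !negb_or => /and4P[z1 z2 z3 z4].
      case: (eqVneq (bt z) 0) => // nz; case: (supp Pz nz) => [zl|[rzl Pn]].
        by case: (two z zl Pz) => ez; move: z3 z4; rewrite ez eqxx.
      have nl : next l (rev z) \in l by rewrite mem_next.
      case: (two _ nl Pn) => en; [rewrite -n1 in en | rewrite -n2 in en];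
        move/next_inj/rev_inj: en => ez; by move: z1 z2; rewrite ez eqxx.
Qed.

Lemma beta_loop : exists c : R, forall z, bt z = c * omega_loop rev R l z.
Proof.
case El: l => [|x0 p].
  by exists 0 => z; rewrite mul0r; apply: HK1; rewrite El.
have step : forall i, (i.+1 < size l)%N -> bt (nth x0 l i.+1) = bt (nth x0 l i).
  move=> i hi; rewrite -[RHS]beta_next; last by rewrite mem_nth // ltnW.
  congr bt; rewrite next_nth (mem_nth x0 (ltnW hi)) index_uniq ?uniq_l ?(ltnW hi) //.
  by rewrite El.
have all0 : forall i, (i < size l)%N -> bt (nth x0 l i) = bt x0.
  elim=> [|i IH] hi; first by rewrite El.
  by rewrite step // IH // ltnW.
have inl z : z \in l -> bt z = bt x0.
  by move=> zl; have := all0 (index z l); rewrite index_mem zl nth_index //; apply.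
exists (bt x0) => z.
rewrite -El omega_loopE !count_uniq_mem ?uniq_l //.
case: (boolP (z \in l)) => zl.
  by rewrite (negbTE (notboth zl)) inl //= subr0 mulr1.
case: (boolP (rev z \in l)) => rzl.
  by rewrite -[z]revK bt1 inl //= sub0r mulrN1.
by rewrite HK1 //= subrr mulr0.
Qed.

End Beta.

Local Notation Iset := (D + D * D * D * D * D)%type.

Definition gen (i : Iset) : face -> R :=
  match i with
  | inl e => d1 (omega_e rev R e)
  | inr ((((w, e1), e2), e3), e4) =>
      fun f => d1 (omega_e rev R e1) f + d1 (omega_e rev R e3) f
  end.

Definition valid (i : Iset) : Prop :=
  match i with
  | inl e => e \notin l /\ rev e \notin l
  | inr ((((w, e1), e2), e3), e4) =>
      visits sigma l w = 2%N /\ crossing rev sigma l w e1 e2 e3 e4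
  end.

Definition validb (i : Iset) : bool :=
  if excluded_middle_informative (valid i) then true else false.

Lemma validbP i : validb i -> valid i.
Proof. by rewrite /validb; case: excluded_middle_informative. Qed.

Lemma validPb i : valid i -> validb i.
Proof. by rewrite /validb; case: excluded_middle_informative. Qed.

Lemma valid_mgen i : valid i -> mgen l (gen i).
Proof.
case: i => [e [h1 h2] | [[[[w e1] e2] e3] e4] [h1 h2]].
  by right; exists e; split.
by left; exists w, e1, e2, e3, e4; split => //; split.
Qed.

Lemma mgen_valid g : mgen l g -> exists i, valid i /\ g =1 gen i.
Proof.
case=> [[w [e1 [e2 [e3 [e4 [h1 [h2 h3]]]]]]] | [e [h1 h2 h3]]].
  by exists (inr ((((w, e1), e2), e3), e4)).
by exists (inl e).
Qed.

Lemma ip2_gen (u : face -> R) i : ip2 (gen i) u =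
  match i with
  | inl e => beta u e
  | inr ((((_, e1), _), e3), _) => beta u e1 + beta u e3
  end.
Proof.
case: i => [e | [[[[w e1] e2] e3] e4]] /=; first by rewrite ip2C ip2_d1omega.
rewrite -!ip2_d1omega -!(ip2C u) /ip2 -big_split /=.
by apply: eq_bigr => f _; rewrite mulrDr.
Qed.

Lemma gen_orth (u : face -> R) :
  (forall e, e \notin l -> rev e \notin l -> beta u e = 0) ->
  (forall w e1 e2 e3 e4, visits sigma l w = 2%N ->
     crossing rev sigma l w e1 e2 e3 e4 -> beta u e1 + beta u e3 = 0) ->
  forall g, mgen l g -> ip2 g u = 0.
Proof.
move=> H1 H2 g /mgen_valid [i [vi gi]]; rewrite (ip2_ext _ gi) ip2_gen.
case: i vi {gi} => [e [h1 h2] | [[[[w e1] e2] e3] e4] [h1 h2]]; first exact: H1.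
exact: H2 h1 h2.
Qed.

Lemma orth_gen (u : face -> R) : (forall g, mgen l g -> ip2 g u = 0) ->
  (forall e, e \notin l -> rev e \notin l -> beta u e = 0) /\
  (forall w e1 e2 e3 e4, visits sigma l w = 2%N ->
     crossing rev sigma l w e1 e2 e3 e4 -> beta u e1 + beta u e3 = 0).
Proof.
move=> H; split.
  move=> e h1 h2; have := H (gen (inl e)) (@valid_mgen (inl e) (conj h1 h2)).
  by rewrite ip2_gen.
move=> w e1 e2 e3 e4 h1 h2.
have := H (gen (inr ((((w, e1), e2), e3), e4))) (@valid_mgen (inr ((((w, e1), e2), e3), e4)) (conj h1 h2)).
by rewrite ip2_gen.
Qed.

Lemma in_m_orth (a u : face -> R) : in_m l a -> (forall g, mgen l g -> ip2 g u = 0) ->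
  ip2 a u = 0.
Proof.
case=> n [c [g [Hg Ha]]] H; rewrite (ip2_ext _ Ha) /ip2.
under eq_bigr do rewrite mulr_suml.
rewrite exchange_big /=; apply: big1 => i _.
under eq_bigr do rewrite -mulrA.
by rewrite -mulr_sumr; have := H _ (Hg i); rewrite /ip2 => ->; rewrite mulr0.
Qed.

Lemma K_beta (v : face -> R) : (forall g, mgen l g -> ip2 g v = 0) ->
  exists c : R, forall z, beta v z = c * omega_loop rev R l z.
Proof.
move=> /orth_gen [H1 H2]; apply: beta_loop => //.
  exact: beta_one.
exact: div_beta.
Qed.

Lemma span (a : face -> R) :
  (forall v, (forall g, mgen l g -> ip2 g v = 0) -> ip2 a v = 0) -> in_m l a.
Proof.
move=> H.
pose s := [seq i <- enum {: Iset} | validb i].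
pose t := in_tuple s.
pose M : 'M[R]_(size s, #|{: face}|) := \matrix_(k, j) gen (tnth t k) (enum_val j).
pose ar : 'rV[R]_#|{: face}| := \row_j a (enum_val j).
have bij : {on predT, bijective (@enum_rank face)}.
  by apply: onW_bij; exists enum_val; [apply: enum_rankK | apply: enum_valK].
have Hc : ar *m cokermx M = 0.
  apply/matrixP => i j; rewrite !mxE.
  pose v f := cokermx M (enum_rank f) j.
  have : ip2 a v = 0.
    apply: H => g /mgen_valid [i0 [vi ge]].
    rewrite (ip2_ext _ ge).
    have i0s : (index i0 s < size s)%N.
      by rewrite index_mem mem_filter mem_enum andbT validPb.
    have : (M *m cokermx M) (Ordinal i0s) j = 0 by rewrite mulmx_coker mxE.
    rewrite mxE => <-; rewrite /ip2 [RHS](reindex enum_rank bij) /=.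
    apply: eq_bigr => f _; rewrite mxE enum_rankK (tnth_nth i0) /= nth_index //.
    by rewrite -index_mem.
  move=> h; rewrite (reindex enum_rank bij) /= -[RHS]h /ip2.
  by apply: eq_bigr => f _; rewrite mxE enum_rankK.
have : (ar <= M)%MS by rewrite submxE Hc.
case/submxP => w Ew.
exists (size s), (fun k => w 0 k), (fun k => gen (tnth t k)); split.
  move=> k; apply: valid_mgen; have : tnth t k \in s by rewrite mem_tnth.
  by rewrite mem_filter => /andP[/validbP].
move=> f; have := congr1 (fun A : 'rV[R]_#|{: face}| => A 0 (enum_rank f)) Ew.
rewrite /= mxE enum_rankK => ->; rewrite mxE; apply: eq_bigr => k _.
by rewrite mxE enum_rankK.
Qed.

Lemma main_res :
  (~ homology_zero rev sigma R l ->
     forall a : face -> R,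
       in_m l a <-> ip2 a (@mustar D rev sigma R) = 0) /\
  (forall n : face -> R,
     dstar2_eq n (omega_loop rev R l) -> ip2 n (@mustar D rev sigma R) = 0 ->
     forall a : face -> R,
       in_m l a <-> (ip2 a (@mustar D rev sigma R) = 0 /\ ip2 a n = 0)).
Proof.
have orth_mustar : forall g, mgen l g -> ip2 g (@mustar D rev sigma R) = 0.
  by apply: gen_orth => *; rewrite /beta /mustar ?subrr ?addr0.
split.
- move=> nh a; split; first by move/in_m_orth; apply.
  move=> ha; apply: span => v Hv; have [c Hc] := K_beta Hv.
  have c0 : c = 0.
    apply/eqP; apply/negPn/negP => cn; apply: nh.
    exists (fun f => c^-1 * v f) => b ob; rewrite ip2_beta //.
    rewrite /ip1; congr (_ * _); apply: eq_bigr => x _; congr (_ * _).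
    by rewrite /beta -mulrBr -/(beta v x) Hc mulrA mulVf // mul1r.
  apply: const_orth ha; apply: beta0_const => z.
  by rewrite Hc c0 mul0r.
- move=> n hn hn0 a.
  have bn : forall z, beta n z = omega_loop rev R l z.
    move=> z; have := hn _ (omega_one z).
    by rewrite ip2_d1omega ip1_omega //; apply: omega_loop_one.
  split.
  + move=> ha; split; first exact: in_m_orth ha orth_mustar.
    apply: (in_m_orth ha); apply: gen_orth.
    * move=> e h1 h2; rewrite bn omega_loopE !count_uniq_mem ?uniq_l //.
      by rewrite (negbTE h1) (negbTE h2) subrr.
    * move=> w e1 e2 e3 e4 _ cr; have [[e3l e4l r1l r2l] _ _ _] := cross_facts cr.
      have n1 := notboth r1l; rewrite revK in n1.
      rewrite !bn !omega_loopE !count_uniq_mem ?uniq_l //.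
      by rewrite r1l e3l (negbTE n1) (negbTE (notboth e3l)) /=; lra.
  + case=> h1 h2; apply: span => v Hv; have [c Hc] := K_beta Hv.
    pose u := fun f => v f - c * n f.
    have -> : ip2 a v = ip2 a u + c * ip2 a n.
      rewrite /ip2 mulr_sumr -big_split; apply: eq_bigr => f _; rewrite /u.
      change (a f * v f = a f * (v f - c * n f) + c * (a f * n f)); ring.
    rewrite h2 mulr0 addr0; apply: const_orth h1; apply: beta0_const => z.
    rewrite /beta /u.
    have := Hc z; have := bn z; rewrite /beta => e1 e2.
    have -> : v (fc z) - c * n (fc z) - (v (fc (rev z)) - c * n (fc (rev z)))
      = (v (fc z) - v (fc (rev z))) - c * (n (fc z) - n (fc (rev z))) by ring.
    by rewrite e1 e2 subrr.
Qed.
End Loop.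
End Pf.

Theorem lemma2p14 (R : realType) (D : finType) (rev : D -> D)
  (sigma : {perm D}) (l : seq D) :
  is_map rev sigma -> tame rev sigma l ->
  (~ homology_zero rev sigma R l ->
     forall a : face rev sigma -> R,
       in_m l a <-> ip2 a (@mustar D rev sigma R) = 0) /\
  (forall n : face rev sigma -> R,
     dstar2_eq n (omega_loop rev R l) -> ip2 n (@mustar D rev sigma R) = 0 ->
     forall a : face rev sigma -> R,
       in_m l a <-> (ip2 a (@mustar D rev sigma R) = 0 /\ ip2 a n = 0)).
Proof.
case=> revK rev_neq conn tl.
exact: (@main_res R D rev sigma revK conn l tl).
Qed.
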